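(* Let $L_1,L_2,L_3\in\mathbb{Z}[x_1,x_2]$ be pairwise non-proportional linear forms, let $\Delta_{i,j}$ denote the resultant of $L_i,L_j$ and $\Delta=|\Delta_{1,2}\Delta_{1,3}\Delta_{2,3}|\neq0$. Write $L_i=\ell_iL_i^*$ with $\ell_i\in\mathbb{Z}$ and $L_i^*$ primitive. For $\mathbf{h}\in\mathbb{N}^3$ let $$\rho(\mathbf{h})=\#\{\mathbf{x}\in[0,h_1h_2h_3)^2\cap\mathbb{Z}^2:\ h_i\mid L_i(\mathbf{x})\ (i=1,2,3)\}.$$ Let $p$ be a prime and $e_1,e_2,e_3\ge0$ integers. (i) If $\min\{e_i,v_p(\ell_i)\}=0$ (for the relevant index $i$), then respectively $\rho(p^{e_1},1,1)=p^{e_1}$, $\rho(1,p^{e_2},1)=p^{e_2}$, $\rho(1,1,p^{e_3})=p^{e_3}$. (ii) Suppose $0\le e_i\le e_j\le e_k$ for a permutation $\{i,j,k\}$ of $\{1,2,3\}$. Then $\rho(p^{e_1},p^{e_2},p^{e_3})=p^{2e_i+e_j+e_k}$ if $p\nmid\Delta$, while if $p\mid\Delta$, $$\rho(p^{e_1},p^{e_2},p^{e_3})\le p^{2e_i+e_j+e_k+\min\{e_j,v_p(\Delta)\}+\min\{e_k,v_p(\ell_k)\}}.$$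
   Context: $v_p$ denotes the $p$-adic valuation. *)

(* Defs.v *)
From mathcomp Require Import all_boot all_order all_algebra.
Set Implicit Arguments. Unset Strict Implicit. Unset Printing Implicit Defensive.
Import Order.TTheory GRing.Theory Num.Theory.

Definition i0 : 'I_3 := @Ordinal 3 0 isT.
Definition i1 : 'I_3 := @Ordinal 3 1 isT.
Definition i2 : 'I_3 := @Ordinal 3 2 isT.

Definition L (a b : 'I_3 -> int) (i : 'I_3) (x1 x2 : int) : int :=
  (a i * x1 + b i * x2)%R.

Definition res (a b : 'I_3 -> int) (i j : 'I_3) : int :=
  (a i * b j - a j * b i)%R.

Definition Delta (a b : 'I_3 -> int) : nat :=
  `| (res a b i0 i1 * res a b i0 i2 * res a b i1 i2)%R |%N.

Definition proportional (a b : 'I_3 -> int) (i j : 'I_3) : Prop :=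
  exists lam mu : int, (lam != 0 \/ mu != 0) /\
    (lam * a i = mu * a j)%R /\ (lam * b i = mu * b j)%R.

(* |ell_i| where L_i = ell_i L_i^* with L_i^* primitive: the gcd of the
   coefficients (the sign of ell_i is irrelevant for p-adic valuations). *)
Definition ell (a b : 'I_3 -> int) (i : 'I_3) : nat := gcdn `|a i|%N `|b i|%N.

Definition Hprod (h : 'I_3 -> nat) : nat := h i0 * h i1 * h i2.

Definition rho (a b : 'I_3 -> int) (h : 'I_3 -> nat) : nat :=
  #|[pred x : 'I_(Hprod h) * 'I_(Hprod h) |
      [forall i : 'I_3, ((h i)%:Z %| L a b i (x.1 : nat)%:Z (x.2 : nat)%:Z)%Z]]|.

(* Main.v *)
Require Import Defs.
From mathcomp Require Import all_boot all_order all_algebra.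
Import Order.TTheory GRing.Theory Num.Theory.
From mathcomp Require Import ring zify.

Section S0.

Lemma sum_eq1 (m t : nat) : t < m -> \sum_(0 <= i < m) (i == t : nat) = 1.
Proof.
move=> tm; rewrite (big_cat_nat _ (n:=t)) //=; last exact: ltnW.
rewrite [X in _ + X]big_ltn // eqxx big_nat_cond big1 ?add0n; last first.
  by move=> i /andP[/andP[_ it] _]; rewrite (ltn_eqF it).
rewrite big_nat_cond big1 ?addn0 // => i /andP[/andP[ti _] _].
by rewrite eq_sym (ltn_eqF ti).
Qed.

Lemma sum_block (m n : nat) (F : nat -> nat) :
  \sum_(0 <= y < m * n.+1) F y = \sum_(0 <= y < m * n) F y + \sum_(0 <= i < m) F (i + m * n).
Proof.
rewrite mulnS addnC (big_cat_nat _ (n := m * n)) //= ?leq_addr //.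
congr (_ + _).
by rewrite -[in X in \sum_(X <= _ < _) _](add0n (m * n)) big_addn addKn.
Qed.

Lemma sum_mod (m n t : nat) : 0 < m -> t < m -> \sum_(0 <= y < m * n) (y %% m == t : nat) = n.
Proof.
move=> m0 tm; elim: n => [|n IH]; first by rewrite muln0 big_geq.
rewrite sum_block IH -[n.+1]addn1; congr (_ + _).
rewrite -(@sum_eq1 m t tm).
rewrite big_nat_cond [in RHS]big_nat_cond; apply: eq_bigr => i /andP[/andP[_ im] _].
by rewrite mulnC addnC modnMDl modn_small.
Qed.

Lemma sum_dvd_scale (m n : nat) (F : nat -> nat) : 0 < m ->
  \sum_(0 <= x < m * n) (m %| x) * F x = \sum_(0 <= y < n) F (m * y).
Proof.
move=> m0; elim: n => [|n IH]; first by rewrite muln0 !big_geq.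
rewrite sum_block IH big_nat_recr //=; congr (_ + _).
rewrite big_ltn // add0n dvdn_mulr // mul1n big_nat_cond big1 ?addn0 //.
move=> i /andP[/andP[i0 im] _].
by rewrite (dvdn_addl _ (dvdn_mulr _ (dvdnn m))) gtnNdvd.
Qed.

End S0.

Section S1.
Local Open Scope ring_scope.

Lemma dvdz_res (m : nat) (c : int) (y : nat) : (0 < m)%N ->
  ((m%:Z %| c + y%:Z)%Z) = (y %% m == `|((- c) %% m%:Z)%Z|%N)%N.
Proof.
move=> m0.
have mz : m%:Z != 0 by rewrite eqz_nat -lt0n.
rewrite -eqz_nat gez0_abs ?modz_ge0 // -modz_nat.
by rewrite eqz_mod_dvd opprK addrC.
Qed.

Lemma sum_dvdz (m n : nat) (c : int) : (0 < m)%N ->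
  (\sum_(0 <= y < m * n) ((m%:Z %| (c + y%:Z)%R)%Z : nat))%N = n.
Proof.
move=> m0.
have mz : m%:Z != 0 by rewrite eqz_nat -lt0n.
rewrite (eq_bigr (fun y => (y %% m == `|((- c) %% m%:Z)%Z|%N : nat))%N); last first.
  by move=> y _; rewrite dvdz_res.
apply: sum_mod => //.
by rewrite -ltz_nat gez0_abs ?modz_ge0 // ltz_pmod // ltz_nat.
Qed.

Lemma line_count_b (p N G : nat) (a b : int) : prime p -> (G <= N)%N -> ~~ (p %| `|b|)%N ->
  (\sum_(0 <= y1 < p ^ N) \sum_(0 <= y2 < p ^ N)
     (((p ^ G)%:Z %| (a * y1%:Z + b * y2%:Z)%R)%Z : nat))%N = (p ^ N * p ^ (N - G))%N.
Proof.
move=> pp GN pb.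
have p0 : (0 < p)%N by apply: prime_gt0.
have cop : coprimez b (p ^ G)%:Z.
  rewrite coprimezE /= coprimeXr //= coprime_sym prime_coprime //.
have [[u v] /= h] := coprimezP _ _ cop.
have e : (p ^ N = p ^ G * p ^ (N - G))%N by rewrite -expnD subnKC.
rewrite (eq_bigr (fun _ => p ^ (N - G))%N) ?sum_nat_const_nat ?subn0 //.
move=> y1 _.
rewrite {1}e (eq_bigr (fun y2 => (((p ^ G)%:Z %| (u * a * y1%:Z + y2%:Z)%R)%Z : nat))).
  by rewrite sum_dvdz // expn_gt0 p0.
move=> y2 _; congr nat_of_bool; apply/idP/idP => H.
- have -> : u * a * y1%:Z + y2%:Z = u * (a * y1%:Z + b * y2%:Z) + (y2%:Z * v) * (p ^ G)%:Z.
    by rewrite -[y2%:Z in LHS]mulr1 -h; ring.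
  by rewrite rpredD ?dvdz_mull ?dvdzz.
- have -> : a * y1%:Z + b * y2%:Z = b * (u * a * y1%:Z + y2%:Z) + (a * y1%:Z * v) * (p ^ G)%:Z.
    by rewrite -[a * y1%:Z in LHS]mulr1 -h; ring.
  by rewrite rpredD ?dvdz_mull ?dvdzz.
Qed.

Lemma line_count (p N G : nat) (a b : int) : prime p -> (G <= N)%N ->
  ~~ (p %| `|a|)%N || ~~ (p %| `|b|)%N ->
  (\sum_(0 <= y1 < p ^ N) \sum_(0 <= y2 < p ^ N)
     (((p ^ G)%:Z %| (a * y1%:Z + b * y2%:Z)%R)%Z : nat))%N = (p ^ N * p ^ (N - G))%N.
Proof.
move=> pp GN /orP[pa|pb]; last exact: line_count_b.
rewrite exchange_big_nat -(@line_count_b p N G b a pp GN pa).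
by apply: eq_bigr => i _; apply: eq_bigr => j _; rewrite addrC.
Qed.

End S1.

Section S2.

Lemma card_sum Q (P : nat -> nat -> bool) :
  #|[pred x : 'I_Q * 'I_Q | P x.1 x.2]| = \sum_(0 <= x1 < Q) \sum_(0 <= x2 < Q) P x1 x2.
Proof.
rewrite big_mkord; under eq_bigr do rewrite big_mkord.
rewrite pair_big /= -sum1_card big_mkcond /=.
by apply: eq_bigr => x _; rewrite inE; case: (P _ _).
Qed.

Lemma rho_sum a b h : rho a b h = \sum_(0 <= x1 < Hprod h) \sum_(0 <= x2 < Hprod h)
   [forall i : 'I_3, ((h i)%:Z %| L a b i x1%:Z x2%:Z)%Z].
Proof. exact: (card_sum _ (fun x1 x2 : nat => [forall i : 'I_3, ((h i)%:Z %| L a b i x1%:Z x2%:Z)%Z])). Qed.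

End S2.

Section S3.

Lemma ell_pos (a b : 'I_3 -> int) (Hnp : forall i j : 'I_3, i != j -> ~ proportional a b i j) i :
  (0 < ell a b i)%N.
Proof.
rewrite /ell gcdn_gt0 !absz_gt0.
have [ha|ha] := eqVneq (a i) 0%R; last by apply/orP; left.
have [hb|hb] := eqVneq (b i) 0%R; last by apply/orP; right.
exfalso.
pose j : 'I_3 := if i == i0 then i1 else i0.
have ij : i != j by rewrite /j; case: ifP => [/eqP -> //|/negbT].
apply: (Hnp i j ij); exists 1%R, 0%R; split; first by left.
by rewrite ha hb !mul0r !mulr0.
Qed.

Lemma not_dvd_coef (a b : 'I_3 -> int) (Hnp : forall i j : 'I_3, i != j -> ~ proportional a b i j)
  p i : prime p -> logn p (ell a b i) = 0%N -> ~~ (p %| `|a i|)%N || ~~ (p %| `|b i|)%N.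
Proof.
move=> pp hl; rewrite -negb_and -dvdn_gcd; apply/negP => hd.
have := logn_gt0 p (ell a b i); rewrite hl mem_primes pp ell_pos //= => /esym.
by rewrite /ell hd.
Qed.

Lemma partI (a b : 'I_3 -> int) (Hnp : forall i j : 'I_3, i != j -> ~ proportional a b i j)
  (p : nat) (Hp : prime p) (e : 'I_3 -> nat) (i : 'I_3) :
  minn (e i) (logn p (ell a b i)) = 0%N ->
  rho a b (fun m => if m == i then p ^ e i else 1%N) = p ^ e i.
Proof.
move=> hmin; rewrite rho_sum.
set h := (fun m => _).
have hp : Hprod h = p ^ e i.
  rewrite /Hprod /h; case: i {h hmin} => [[|[|[|//]]] ?] /=;
  by rewrite /i0 /i1 /i2 /= ?muln1 ?mul1n.
rewrite hp.
have hc : forall x1 x2 : nat, [forall m : 'I_3, ((h m)%:Z %| L a b m x1%:Z x2%:Z)%Z] =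
    ((p ^ e i)%:Z %| (a i * x1%:Z + b i * x2%:Z)%R)%Z.
  move=> x1 x2; apply/forallP/idP => [/(_ i)|H m]; first by rewrite /h eqxx.
  rewrite /h; case: eqP => [-> //|_]; exact: dvd1z.
under eq_bigr do under eq_bigr do rewrite hc.
have [e0|epos] := posnP (e i).
  rewrite e0 expn0 !big_nat1 /=; by rewrite dvd1z.
have hl : logn p (ell a b i) = 0%N by move: hmin; rewrite /minn; case: ltnP; lia.
rewrite line_count // ?subnn ?expn0 ?muln1 //.
exact: not_dvd_coef.
Qed.

End S3.

Section S4.

Lemma dvd_log_cancel (p e r n : nat) : prime p -> (0 < r)%N -> (p ^ e %| r * n)%N ->
  (p ^ (e - logn p r) %| n)%N.
Proof.
move=> pp r0; have [->|n0] := posnP n; first by rewrite dvdn0.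
rewrite !pfactor_dvdn ?muln_gt0 ?r0 // lognM //; lia.
Qed.

Lemma dvdz_log_cancel (p e : nat) (r z : int) : prime p -> r != 0%R ->
  ((p ^ e)%:Z %| (r * z)%R)%Z -> ((p ^ (e - logn p `|r|))%:Z %| z)%Z.
Proof.
move=> pp r0; rewrite !dvdzE /= abszM; apply: dvd_log_cancel => //.
by rewrite absz_gt0.
Qed.

Lemma dummy_ : True. Proof. by []. Qed.

Local Open Scope ring_scope.

Lemma partB (p ej ek N : nat) (a b : 'I_3 -> int) (j k : 'I_3) :
  prime p -> (ej <= ek)%N -> (ek <= N)%N -> res a b j k != 0 -> (0 < ell a b k)%N ->
  (\sum_(0 <= x1 < p ^ N) \sum_(0 <= x2 < p ^ N)
     ((((p ^ ej)%:Z %| L a b j x1%:Z x2%:Z)%Z && ((p ^ ek)%:Z %| L a b k x1%:Z x2%:Z)%Z) : nat)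
   <= p ^ (2 * N - ej - ek + minn ej (logn p `|res a b j k|)
           + minn ek (logn p (ell a b k))))%N.
Proof.
move=> pp jk kN r0 g0.
set r := res a b j k.
set s := (ej - logn p `|r|)%N.
have p0 : (0 < p)%N by apply: prime_gt0.
have Hpt : forall x1 x2 : nat,
  (((((p ^ ej)%:Z %| L a b j x1%:Z x2%:Z)%Z && ((p ^ ek)%:Z %| L a b k x1%:Z x2%:Z)%Z) : nat)
  <= ((p ^ s %| x1)%N : nat) * (((p ^ s %| x2)%N : nat) * (((p ^ ek)%:Z %| L a b k x1%:Z x2%:Z)%Z : nat)))%N.
  move=> x1 x2; case/boolP: (_ && _) => // /andP[Hj Hk]; rewrite Hk muln1.
  have Hk' : ((p ^ ej)%:Z %| L a b k x1%:Z x2%:Z)%Z.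
    by apply: dvdz_trans Hk; rewrite dvdzE /= dvdn_exp2l.
  have h1 : ((p ^ ej)%:Z %| r * x1%:Z)%Z.
    have -> : r * x1%:Z = b k * L a b j x1%:Z x2%:Z - b j * L a b k x1%:Z x2%:Z.
      by rewrite /r /res /L; ring.
    by rewrite rpredB ?dvdz_mull.
  have h2 : ((p ^ ej)%:Z %| r * x2%:Z)%Z.
    have -> : r * x2%:Z = a j * L a b k x1%:Z x2%:Z - a k * L a b j x1%:Z x2%:Z.
      by rewrite /r /res /L; ring.
    by rewrite rpredB ?dvdz_mull.
  have := @dvdz_log_cancel p ej r _ pp r0 h1; have := @dvdz_log_cancel p ej r _ pp r0 h2.
  by rewrite !dvdzE /= => -> ->.
have sN : (s <= N)%N by rewrite /s; lia.
apply: (@leq_trans (\sum_(0 <= x1 < p ^ N) ((p ^ s %| x1 : nat) * \sum_(0 <= x2 < p ^ N)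
    ((p ^ s %| x2 : nat) * (((p ^ ek)%:Z %| L a b k x1%:Z x2%:Z)%Z : nat))))%N).
  by apply: leq_sum => x1 _; rewrite big_distrr /=; apply: leq_sum => x2 _; exact: Hpt.
have eN : (p ^ N = p ^ s * p ^ (N - s))%N by rewrite -expnD subnKC.
have ps0 : (0 < p ^ s)%N by rewrite expn_gt0 p0.
rewrite eN sum_dvd_scale //.
rewrite (eq_bigr (fun y1 => \sum_(0 <= y2 < p ^ (N - s))
   (((p ^ ek)%:Z %| L a b k (p ^ s * y1)%N%:Z (p ^ s * y2)%N%:Z)%Z : nat))%N); last first.
  by move=> y1 _; rewrite sum_dvd_scale.
set g := ell a b k.
set G := (ek - s - logn p g)%N.
have gz : g%:Z != 0 by rewrite eqz_nat -lt0n.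
have ga : (g%:Z %| a k)%Z by rewrite dvdzE /= /g /ell dvdn_gcdl.
have gb : (g%:Z %| b k)%Z by rewrite dvdzE /= /g /ell dvdn_gcdr.
set a' := (a k %/ g%:Z)%Z.
set b' := (b k %/ g%:Z)%Z.
have ea : a k = a' * g%:Z by rewrite /a' divzK.
have eb : b k = b' * g%:Z by rewrite /b' divzK.
apply: (@leq_trans (\sum_(0 <= y1 < p ^ (N - s)) \sum_(0 <= y2 < p ^ (N - s))
     (((p ^ G)%:Z %| (a' * y1%:Z + b' * y2%:Z)%R)%Z : nat))%N).
  apply: leq_sum => y1 _; apply: leq_sum => y2 _.
  case/boolP: (((p ^ ek)%:Z %| _)%Z) => //= H; rewrite lt0b.
  have e1 : L a b k (p ^ s * y1)%N%:Z (p ^ s * y2)%N%:Z =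
      (p ^ s)%:Z * (g%:Z * (a' * y1%:Z + b' * y2%:Z)).
    by rewrite /L !PoszM ea eb; ring.
  have e2 : (p ^ ek)%:Z = (p ^ s)%:Z * (p ^ (ek - s))%:Z by rewrite -PoszM -expnD subnKC // /s; lia.
  move: H; rewrite e1 e2 dvdz_mul2l; last by rewrite eqz_nat -lt0n.
  by move/(@dvdz_log_cancel p (ek - s) g%:Z _ pp gz).
have cop : gcdn `|a'| `|b'| = 1%N.
  have : (g = gcdn `|a'| `|b'| * g)%N.
    have ea' : `|a k|%N = (`|a'| * g)%N by rewrite ea abszM.
    have eb' : `|b k|%N = (`|b'| * g)%N by rewrite eb abszM.
    by rewrite muln_gcdl -ea' -eb'.
  by rewrite -{1}(mul1n g) => /eqP; rewrite eqn_pmul2r // eq_sym => /eqP.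
have pab : ~~ (p %| `|a'|)%N || ~~ (p %| `|b'|)%N.
  rewrite -negb_and -dvdn_gcd cop; apply/negP => /dvdn_leq /= /(_ isT).
  by rewrite leqNgt prime_gt1.
have GN : (G <= N - s)%N by rewrite /G; clear -kN sN; lia.
rewrite line_count // -expnD leq_pexp2l //.
rewrite /G /s; clear -jk kN; lia.
Qed.

End S4.

Section S5.

Lemma sum_pair Q (F : nat -> nat -> nat) :
  \sum_(0 <= x1 < Q) \sum_(0 <= x2 < Q) F x1 x2 = \sum_(x : 'I_Q * 'I_Q) F x.1 x.2.
Proof.
rewrite big_mkord; under eq_bigr do rewrite big_mkord.
by rewrite pair_big.
Qed.

Lemma sum_dvdn_range d Q : (0 < Q)%N -> (d %| Q)%N -> \sum_(0 <= y < Q) (d %| y : nat) = Q %/ d.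
Proof.
move=> Q0 dQ; have d0 : (0 < d)%N by apply: dvdn_gt0 dQ.
rewrite -{1}(divnK dQ) mulnC -[RHS](@sum_mod d (Q %/ d) 0) //.

Qed.

Lemma same_mod_nat (Q x y : nat) : (x < Q)%N -> (y < Q)%N -> (Q%:Z %| (x%:Z - y%:Z)%R)%Z -> x = y.
Proof.
move=> xQ yQ; rewrite -eqz_mod_dvd !modz_nat => /eqP [].
by rewrite !modn_small.
Qed.

Local Open Scope ring_scope.

Lemma mod_dvd_iff (Q d : nat) (z : int) : (0 < Q)%N -> (d %| Q)%N ->
  (d%:Z %| z)%Z = (d %| `|(z %% Q%:Z)%Z|)%N.
Proof.
move=> Q0 dQ.
have Qz : Q%:Z != 0 by rewrite eqz_nat -lt0n.
have -> : (d %| `|(z %% Q%:Z)%Z|)%N = (d%:Z %| (z %% Q%:Z)%Z)%Z by rewrite dvdzE.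
rewrite {1}(divz_eq z Q%:Z) rpredDl //.
by apply: dvdz_mull; rewrite dvdzE.
Qed.

Lemma count_bij (n : nat) (a b : 'I_3 -> int) (j k : 'I_3) (d1 d2 : nat) :
  coprime `|res a b j k| n.+1 -> (d1 %| n.+1)%N -> (d2 %| n.+1)%N ->
  (\sum_(0 <= x1 < n.+1) \sum_(0 <= x2 < n.+1)
     (((d1%:Z %| L a b j x1%:Z x2%:Z)%Z && (d2%:Z %| L a b k x1%:Z x2%:Z)%Z) : nat))%N
  = (n.+1 %/ d1 * (n.+1 %/ d2))%N.
Proof.
move=> cop d1Q d2Q.
set Q := n.+1.
have Q0 : (0 < Q)%N by [].
have Qz : Q%:Z != 0 by [].
rewrite sum_pair.
pose f (z : int) : 'I_Q := inord `|(z %% Q%:Z)%Z|.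
have fK z : (f z : nat) = `|(z %% Q%:Z)%Z|%N.
  rewrite inordK // -ltz_nat gez0_abs ?modz_ge0 //.
  by have := ltz_pmod z (isT : 0 < Q%:Z).
pose phi (x : 'I_Q * 'I_Q) := (f (L a b j x.1 x.2), f (L a b k x.1 x.2)).
have step : forall z w, f z = f w -> (Q%:Z %| z - w)%Z.
  move=> z w /(congr1 (@nat_of_ord Q)); rewrite !fK => /(congr1 Posz).
  rewrite !gez0_abs ?modz_ge0 // => e.
  by rewrite -eqz_mod_dvd; apply/eqP.
have copz : coprimez Q%:Z (res a b j k) by rewrite coprimezE coprime_sym.
have inj : injective phi.
  move=> [x1 x2] [y1 y2] [/step h1 /step h2].
  have e1 : (x1 : nat) = y1.
    apply: same_mod_nat => //.
    rewrite -(Gauss_dvdzr _ copz).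
    have -> : res a b j k * ((x1 : nat)%:Z - (y1 : nat)%:Z) =
      b k * (L a b j x1 x2 - L a b j y1 y2) - b j * (L a b k x1 x2 - L a b k y1 y2).
      by rewrite /res /L; ring.
    by rewrite rpredB ?dvdz_mull.
  have e2 : (x2 : nat) = y2.
    apply: same_mod_nat => //.
    rewrite -(Gauss_dvdzr _ copz).
    have -> : res a b j k * ((x2 : nat)%:Z - (y2 : nat)%:Z) =
      a j * (L a b k x1 x2 - L a b k y1 y2) - a k * (L a b j x1 x2 - L a b j y1 y2).
      by rewrite /res /L; ring.
    by rewrite rpredB ?dvdz_mull.
  by rewrite (val_inj e1) (val_inj e2).
pose G (y : 'I_Q * 'I_Q) := ((d1 %| y.1)%N * (d2 %| y.2)%N)%N.
rewrite (eq_bigr (fun x => G (phi x))); last first.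
  move=> x _; rewrite /G /phi /= !fK -(@mod_dvd_iff Q d1 _ Q0 d1Q) -(@mod_dvd_iff Q d2 _ Q0 d2Q).
  by rewrite mulnb.
rewrite -(@reindex_inj _ _ _ _ phi xpredT G inj) /G.
rewrite -(sum_pair Q (fun y1 y2 => ((d1 %| y1)%N * (d2 %| y2)%N)%N)).
under eq_bigr do rewrite -big_distrr /=.
by rewrite -big_distrl /= !sum_dvdn_range.
Qed.

Lemma partA (p ei ej ek : nat) (a b : 'I_3 -> int) (i j k : 'I_3) :
  prime p -> (ei <= ej)%N -> (ej <= ek)%N -> ~~ (p %| `|res a b j k|)%N ->
  (\sum_(0 <= x1 < p ^ (ei + ej + ek)) \sum_(0 <= x2 < p ^ (ei + ej + ek))
     ([&& ((p ^ ei)%:Z %| L a b i x1%:Z x2%:Z)%Z, ((p ^ ej)%:Z %| L a b j x1%:Z x2%:Z)%Z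
        & ((p ^ ek)%:Z %| L a b k x1%:Z x2%:Z)%Z] : nat))%N
  = (p ^ (2 * ei + ej + ek))%N.
Proof.
move=> pp ij jk pr.
have p0 : (0 < p)%N by apply: prime_gt0.
have cp : coprime p `|res a b j k| by rewrite prime_coprime.
set N := (ei + ej + ek)%N.
have -> : (p ^ N = (p ^ N).-1.+1)%N by rewrite prednK // expn_gt0 p0.
rewrite (eq_bigr (fun x1 => \sum_(0 <= x2 < (p ^ N).-1.+1)
    ((((p ^ ej)%:Z %| L a b j x1%:Z x2%:Z)%Z && ((p ^ ek)%:Z %| L a b k x1%:Z x2%:Z)%Z) : nat))%N);
  last first.
  move=> x1 _; apply: eq_bigr => x2 _.
  case Hj: ((p ^ ej)%:Z %| L a b j x1%:Z x2%:Z)%Z; last by rewrite andbF.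
  case Hk: ((p ^ ek)%:Z %| L a b k x1%:Z x2%:Z)%Z; last by rewrite !andbF.
  suff -> : ((p ^ ei)%:Z %| L a b i x1%:Z x2%:Z)%Z by [].
  have c2 : coprimez (p ^ ei)%:Z (res a b j k).
    by rewrite coprimezE /= coprimeXl.
  rewrite -(Gauss_dvdzr _ c2).
  have -> : res a b j k * L a b i x1%:Z x2%:Z =
     res a b i k * L a b j x1%:Z x2%:Z - res a b i j * L a b k x1%:Z x2%:Z.
    by rewrite /res /L; ring.
  have dj : ((p ^ ei)%:Z %| (p ^ ej)%:Z)%Z by rewrite dvdzE /= dvdn_exp2l.
  have dk : ((p ^ ei)%:Z %| (p ^ ek)%:Z)%Z by rewrite dvdzE /= dvdn_exp2l // (leq_trans ij).
  by rewrite rpredB ?dvdz_mull // ?(dvdz_trans dj Hj) ?(dvdz_trans dk Hk).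
rewrite count_bij; last 3 first.
- by rewrite prednK ?expn_gt0 ?p0 // coprime_sym coprimeXl // .
- by rewrite prednK ?expn_gt0 ?p0 // dvdn_exp2l // /N; lia.
- by rewrite prednK ?expn_gt0 ?p0 // dvdn_exp2l // /N; lia.
rewrite prednK ?expn_gt0 ?p0 // -!expnB //; try (rewrite /N; lia).
rewrite -expnD; apply: f_equal; rewrite /N; lia.
Qed.

End S5.

Section S6.

Lemma ord3 (m : 'I_3) : m = i0 \/ m = i1 \/ m = i2.
Proof.
case: m => [[|[|[|m]]] H] //.
- by left; apply: val_inj.
- by right; left; apply: val_inj.
- by right; right; apply: val_inj.
Qed.

Lemma res_swap a b i j : res a b j i = (- res a b i j)%R.
Proof. rewrite /res; ring. Qed.

Lemma absres_swap a b i j : `|res a b j i|%N = `|res a b i j|%N.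
Proof. by rewrite res_swap abszN. Qed.

Lemma d3 (x y z : nat) : (x %| x * y * z /\ y %| x * y * z /\ z %| x * y * z)%N.
Proof.
split; first by apply: dvdn_mulr; apply: dvdn_mulr.
split; first by apply: dvdn_mulr; apply: dvdn_mull.
exact: dvdn_mull.
Qed.

Lemma res_dvd_Delta a b (j k : 'I_3) : j != k -> (`|res a b j k| %| Delta a b)%N.
Proof.
rewrite /Delta !abszM.
case: (ord3 j) => [->|[->|->]]; case: (ord3 k) => [->|[->|->]] //= _;
  rewrite ?[`|res a b i1 i0|]absres_swap ?[`|res a b i2 i0|]absres_swap ?[`|res a b i2 i1|]absres_swap;
  have [? [? ?]] := d3 `|res a b i0 i1| `|res a b i0 i2| `|res a b i1 i2|; done.
Qed.

Lemma perm3 (i j k : 'I_3) : i != j -> i != k -> j != k ->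
  (forall m : 'I_3, [|| m == i, m == j | m == k]) /\
  (forall f : 'I_3 -> nat, (f i0 + f i1 + f i2 = f i + f j + f k)%N).
Proof.
case: (ord3 i) => [->|[->|->]]; case: (ord3 j) => [->|[->|->]];
  case: (ord3 k) => [->|[->|->]] //= _ _ _; split => [m|f];
  try (case: (ord3 m) => [->|[->|->]] //); ring.
Qed.

End S6.


Theorem lemma3 (a b : 'I_3 -> int)
  (Hnp : forall i j : 'I_3, i != j -> ~ proportional a b i j)
  (HD : Delta a b != 0%N)
  (p : nat) (Hp : prime p) (e : 'I_3 -> nat) :
  (forall i : 'I_3, minn (e i) (logn p (ell a b i)) = 0%N ->
     rho a b (fun m => if m == i then p ^ e i else 1%N) = p ^ e i)
  /\
  (forall i j k : 'I_3, i != j -> i != k -> j != k ->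
     (e i <= e j <= e k)%N ->
     (~~ (p %| Delta a b) ->
        rho a b (fun m => p ^ e m) = p ^ (2 * e i + e j + e k)) /\
     (p %| Delta a b ->
        (rho a b (fun m => p ^ e m) <=
         p ^ (2 * e i + e j + e k + minn (e j) (logn p (Delta a b))
              + minn (e k) (logn p (ell a b k))))%N)).
Proof.
split; first by move=> i; exact: partI.
move=> i j k ij ik jk /andP[eij ejk].
have [Hall Hsum] := @perm3 i j k ij ik jk.
have Hrho : rho a b (fun m => p ^ e m) =
  (\sum_(0 <= x1 < p ^ (e i + e j + e k)) \sum_(0 <= x2 < p ^ (e i + e j + e k))
     ([&& ((p ^ e i)%:Z %| L a b i x1%:Z x2%:Z)%Z, ((p ^ e j)%:Z %| L a b j x1%:Z x2%:Z)%Z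
        & ((p ^ e k)%:Z %| L a b k x1%:Z x2%:Z)%Z] : nat))%N.
  rewrite rho_sum.
  have -> : Hprod (fun m => p ^ e m) = p ^ (e i + e j + e k) by rewrite /Hprod -!expnD Hsum.
  apply: eq_bigr => x1 _; apply: eq_bigr => x2 _; congr nat_of_bool.
  apply/forallP/and3P => [H|[H1 H2 H3] m]; first by split; apply: H.
  by case/or3P: (Hall m) => /eqP ->.
have rjk := @res_dvd_Delta a b j k jk.
have pos : (0 < Delta a b)%N by rewrite lt0n.
split.
- move=> npD; rewrite Hrho partA //.
  by apply: contra npD => H; apply: dvdn_trans H rjk.
- move=> pD; rewrite Hrho.
  have r0 : res a b j k != 0%R.
    apply/eqP => r0; move: rjk; rewrite r0 /= dvd0n => /eqP H.
    by move: HD; rewrite H.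
  apply: (@leq_trans (\sum_(0 <= x1 < p ^ (e i + e j + e k)) \sum_(0 <= x2 < p ^ (e i + e j + e k))
     ((((p ^ e j)%:Z %| L a b j x1%:Z x2%:Z)%Z && ((p ^ e k)%:Z %| L a b k x1%:Z x2%:Z)%Z) : nat))%N).
    apply: leq_sum => x1 _; apply: leq_sum => x2 _.
    by case: ((p ^ e i)%:Z %| _)%Z.
  have kN : (e k <= e i + e j + e k)%N by rewrite leq_addl.
  apply: leq_trans (@partB p (e j) (e k) (e i + e j + e k) a b j k Hp ejk kN r0 (@ell_pos a b Hnp k)) _.
  rewrite leq_pexp2l ?prime_gt0 //.
  have hl := dvdn_leq_log p pos rjk; clear -hl eij ejk; lia.
Qed.
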